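(* Let $G$ be a profinite group and $X$ a scattered profinite $G$-space of finite Cantor–Bendixson rank $n$, such that each $x\in X$ has a neighbourhood basis $\mathcal{B}_x$ consisting of $\mathrm{stab}_G(x)$-invariant open sets. Let $0\to\mathrm{const}\,\mathbb{Q}\xrightarrow{\delta_0}I^0\xrightarrow{\delta_1}I^1\xrightarrow{\delta_2}\cdots$ be the equivariant Godement resolution of the constant sheaf $\mathrm{const}\,\mathbb{Q}$ (with $I^{-1}=\mathrm{const}\,\mathbb{Q}$). Then for every $x\in X$, every $U\in\mathcal{B}_x$ and every $i<\mathrm{ht}(x)$, the cokernel of $\delta_i(U)\colon I^{i-1}(U)\to I^i(U)$ contains a nonzero element represented by a $\mathrm{stab}_G(x)$-invariant section of $I^i$ over $U$.
   Context: A profinite $G$-space is a compact Hausdorff totally disconnected space with continuous $G$-action. $G$-equivariant sheaves of $\mathbb{Q}$-modules over $X$: sheaf spaces of $\mathbb{Q}$-modules $p\colon E\to X$ with continuous $G$-action making $p$ equivariant and stalk maps linear. $\mathrm{const}\,\mathbb{Q}$ is the constant sheaf with stalk $\mathbb{Q}$ and trivial action. For a $G$-sheaf $F$, $I^0(F)=\prod_A i_{A*}(F|_A)$ (product over $G$-orbits $A$, $i_{A*}$ extension by zero), $\delta_F\colon F\to I^0(F)$ the canonical monomorphism; the equivariant Godement resolution of $E$ has $C^0=E$, $I^k=I^0(C^k)$, $C^{k+1}=\mathrm{coker}(\delta_{C^k})$, and differentials the composites $I^{k}\to C^{k+1}\to I^{k+1}$. Cantor–Bendixson process, rank, scattered: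 as usual ($X^{(\alpha+1)}$ removes isolated points of $X^{(\alpha)}$, intersections at limits); $\mathrm{ht}(x)=\kappa$ with $x\in X^{(\kappa)}\setminus X^{(\kappa+1)}$. $F(U)$ denotes sections over $U$. *)

(* Defs.v *)
From HB Require Import structures.
From mathcomp Require Import all_boot all_order all_algebra.
From mathcomp Require Import all_classical all_reals topology.
From mathcomp Require Import rat.
Set Implicit Arguments. Unset Strict Implicit. Unset Printing Implicit Defensive.
Import Order.TTheory GRing.Theory Num.Theory.
Local Open Scope classical_set_scope.
Local Open Scope ring_scope.

Definition is_profinite_space (T : topologicalType) : Prop :=
  [/\ compact [set: T], hausdorff_space T & totally_disconnected [set: T]].

Definition is_profinite_group (G : topologicalType)
  (mul : G -> G -> G) (inv : G -> G) (one : G) : Prop :=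
  [/\ [/\ (forall a b c, mul a (mul b c) = mul (mul a b) c),
          (forall a, mul one a = a /\ mul a one = a) &
          (forall a, mul (inv a) a = one /\ mul a (inv a) = one)],
      continuous (fun p : G * G => mul p.1 p.2),
      continuous inv & is_profinite_space G].

Definition is_profinite_Gspace (G X : topologicalType)
  (mul : G -> G -> G) (one : G) (act : G -> X -> X) : Prop :=
  [/\ (forall x, act one x = x),
      (forall g h x, act (mul g h) x = act g (act h x)),
      continuous (fun p : G * X => act p.1 p.2) & is_profinite_space X].

Section CB.
Variable X : topologicalType.

Definition isolated_in (A : set X) (x : X) : Prop :=
  A x /\ exists U, open U /\ U `&` A = [set x].

Definition cb_deriv (A : set X) : set X := [set x | A x /\ ~ isolated_in A x].

Definition cbX (k : nat) : set X := iter k cb_deriv [set: X].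

Definition scattered : Prop :=
  forall A : set X, A !=set0 -> exists x, isolated_in A x.

Definition cb_rank (n : nat) : Prop :=
  cbX n = set0 /\ forall m, cbX m = set0 -> (n <= m)%N.

Definition height (x : X) (k : nat) : Prop := cbX k x /\ ~ cbX k.+1 x.

End CB.

Section Sheaves.
Variables (G X : topologicalType) (inv : G -> G) (act : G -> X -> X).

(* A sheaf space over X: the underlying space is the subspace [pts] of the
   carrier [car]; [sopen] are its open sets (subsets of [pts]); fibrewise
   Q-module operations and the G-action are given as functions. *)
Record shsp := ShSp {
  car : Type;
  pts : set car;
  sopen : set car -> Prop;
  proj : car -> X;
  szero : X -> car;
  sadd : car -> car -> car;
  sopp : car -> car;
  sscale : rat -> car -> car;
  sact : G -> car -> car }.
Arguments pts : clear implicits.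
Arguments sopen : clear implicits.
Arguments proj : clear implicits.
Arguments szero : clear implicits.
Arguments sadd : clear implicits.
Arguments sopp : clear implicits.
Arguments sscale : clear implicits.
Arguments sact : clear implicits.

(* continuous sections of F over an (arbitrary) subset W of X (subspace topology) *)
Definition Gamma (F : shsp) (W : set X) (s : X -> car F) : Prop :=
  (forall y, W y -> pts F (s y) /\ proj F (s y) = y) /\
  (forall y, W y -> forall O, sopen F O -> O (s y) ->
     exists V, open V /\ V y /\ forall z, W z -> V z -> O (s z)).
Arguments Gamma : clear implicits.

Definition orbit (A : set X) : Prop := exists x, A = range (fun g => act g x).

(* The constant sheaf const Q: sheaf space X x Q (Q discrete), trivial action on Q *)
Definition constQ : shsp :=
  @ShSp (X * rat)%type [set: X * rat]
    (fun O => forall e, O e -> exists V, open V /\ V e.1 /\ forall y, V y -> O (y, e.2))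
    fst (fun x => (x, 0)) (fun e f => (e.1, e.2 + f.2)) (fun e => (e.1, - e.2))
    (fun q e => (e.1, q * e.2)) (fun g e => (act g e.1, e.2)).

Section Godement.
Variable F : shsp.

(* families indexed by orbits A of sections of F over U /\ A :
   elements of prod_A (i_{A*}(F|_A))(U) *)
Definition S := set X -> X -> car F.

Definition secI (U : set X) (sg : S) : Prop :=
  open U /\ forall A, orbit A -> Gamma F (U `&` A) (sg A).

(* germ equivalence at x for the product presheaf *)
Definition eqI (x : X) (r r' : set X * S) : Prop :=
  exists W, [/\ open W, W x, W `<=` r.1 `&` r'.1 &
    forall A, orbit A -> forall y, W y -> A y -> r.2 A y = r'.2 A y].

(* germ equivalence at x for the presheaf cokernel of delta_F : F -> I^0 F :
   r - r' is locally (near x) the image of a section t of F *)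
Definition eqC (x : X) (r r' : set X * S) : Prop :=
  exists W t, [/\ open W, W x, W `<=` r.1 `&` r'.1, Gamma F W t &
    forall A, orbit A -> forall y, W y -> A y -> r.2 A y = sadd F (r'.2 A y) (t y)].

Definition gcar := (X * set (set X * S))%type.

Section Germ.
Variable eqv : X -> set X * S -> set X * S -> Prop.

Definition germ (x : X) (r : set X * S) : gcar :=
  (x, [set r' | secI r'.1 r'.2 /\ eqv x r' r]).

Definition gzero (x : X) : gcar := germ x ([set: X], fun _ y => szero F y).
Definition gadd (e1 e2 : gcar) : gcar :=
  (e1.1, [set r | secI r.1 r.2 /\ exists r1 r2, [/\ e1.2 r1, e2.2 r2 &
     eqv e1.1 r (r1.1 `&` r2.1, fun A y => sadd F (r1.2 A y) (r2.2 A y))]]).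
Definition gopp (e : gcar) : gcar :=
  (e.1, [set r | secI r.1 r.2 /\ exists r1, e.2 r1 /\
     eqv e.1 r (r1.1, fun A y => sopp F (r1.2 A y))]).
Definition gscale (q : rat) (e : gcar) : gcar :=
  (e.1, [set r | secI r.1 r.2 /\ exists r1, e.2 r1 /\
     eqv e.1 r (r1.1, fun A y => sscale F q (r1.2 A y))]).
(* (g.sigma)_A (y) = g.(sigma_A (g^-1 y)) on gU  (orbits are G-stable) *)
Definition gact (g : G) (e : gcar) : gcar :=
  (act g e.1, [set r | secI r.1 r.2 /\ exists r1, e.2 r1 /\
     eqv (act g e.1) r (act g @` r1.1, fun A y => sact F g (r1.2 A (act (inv g) y)))]).
End Germ.

(* naive product: etale space of the presheaf U |-> prod_A Gamma(U /\ A, F) *)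
Definition isgermI (e : gcar) : Prop :=
  exists U sg, [/\ secI U sg, U e.1 & e = germ eqI e.1 (U, sg)].

Definition NO (O : set gcar) : Prop :=
  O `<=` isgermI /\ forall e, O e -> exists U sg, [/\ secI U sg, U e.1,
     e = germ eqI e.1 (U, sg) & forall y, U y -> O (germ eqI y (U, sg))].

(* the product in the category of G-sheaves: the union of all open G-stable
   subspaces of the naive product on which the action G x O -> O is continuous *)
Definition Gcont (O : set gcar) : Prop :=
  (forall g e, O e -> O (gact eqI g e)) /\
  forall g e, O e -> forall N, NO N -> N (gact eqI g e) ->
    exists V M, [/\ open V, V g, NO M, M e &
      forall g' e', V g' -> M e' -> O e' -> N (gact eqI g' e')].

Definition Eprod : set gcar := [set e | exists O, [/\ NO O, Gcont O & O e]].

(* I^0(F) = prod_A i_{A*}(F|_A) *)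
Definition I0 : shsp :=
  @ShSp gcar Eprod (fun O => exists O', NO O' /\ O = O' `&` Eprod) fst
    (gzero eqI) (gadd eqI) (gopp eqI) (gscale eqI) (gact eqI).

(* quotient map I^0(F) -> coker(delta_F), stalkwise *)
Definition qmap (e : gcar) : gcar :=
  (e.1, [set r | secI r.1 r.2 /\ exists r0, e.2 r0 /\ eqC e.1 r r0]).

(* coker(delta_F) as a sheaf space: stalkwise quotient, quotient topology *)
Definition Coker : shsp :=
  @ShSp gcar (qmap @` Eprod)
    (fun O => O `<=` qmap @` Eprod /\ sopen I0 [set e | Eprod e /\ O (qmap e)]) fst
    (gzero eqC) (gadd eqC) (gopp eqC) (gscale eqC) (gact eqC).

End Godement.

Fixpoint Cs (k : nat) : shsp := match k with 0 => constQ | k.+1 => Coker (Cs k) end.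
Definition Is (k : nat) : shsp := I0 (Cs k).

(* I^{i-1}, with I^{-1} = const Q *)
Definition Iprev (i : nat) : shsp := match i with 0 => constQ | k.+1 => Is k end.

(* delta_i(U) : I^{i-1}(U) -> I^i(U) on sections;
   delta_0 = delta_{const Q}, delta_{k+1} = (I^k -> C^{k+1} -> I^{k+1}) *)
Definition delta (i : nat) : set X -> (X -> car (Iprev i)) -> X -> car (Is i) :=
  match i as i0 return set X -> (X -> car (Iprev i0)) -> X -> car (Is i0) with
  | 0 => fun U t y => germ (@eqI constQ) y (U, fun _ => t)
  | k.+1 => fun U s y =>
      germ (@eqI (Cs k.+1)) y (U, fun _ z => @qmap (Cs k) (s z))
  end.

End Sheaves.

Arguments Gamma {G X} F W s.
Arguments pts {G X} s _.
Arguments sopen {G X} s _.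
Arguments proj {G X} s _.
Arguments szero {G X} s _.
Arguments sadd {G X} s _ _.
Arguments sopp {G X} s _.
Arguments sscale {G X} s _ _.
Arguments sact {G X} s _ _.
Arguments delta {G X} inv act i.

(* Main.v *)
Require Import Defs.
From mathcomp Require Import all_boot all_order all_algebra.
From mathcomp Require Import all_classical all_reals topology.

Set Implicit Arguments. Unset Strict Implicit. Unset Printing Implicit Defensive.
Local Open Scope classical_set_scope.

Lemma open_of_nbhd (T : topologicalType) (A : set T) :
  (forall y, A y -> exists V, [/\ open V, V y & V `<=` A]) -> open A.
Proof.
move=> H; rewrite openE => y /H [V [oV Vy VA]].
rewrite /interior /=; apply: (@filterS _ _ _ V) => //.
by apply: open_nbhs_nbhs.
Qed.

Lemma nbhd_of_open (T : topologicalType) (A : set T) y :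
  open A -> A y -> nbhs y A.
Proof. by move=> oA Ay; apply: open_nbhs_nbhs. Qed.

Lemma nbhs_open (T : topologicalType) (A : set T) y :
  nbhs y A -> exists V, [/\ open V, V y & V `<=` A].
Proof. by rewrite nbhsE => -[V [oV Vy] VA]; exists V. Qed.

Section Act.
Variables (G X : topologicalType) (act : G -> X -> X).
Hypothesis act_cont : continuous (fun p : G * X => act p.1 p.2).

Lemma act_nbhd (W : set X) g y : open W -> W (act g y) ->
  exists V V', [/\ open V, V g, open V', V' y &
    forall g' y', V g' -> V' y' -> W (act g' y')].
Proof.
move=> oW Wg.
have : nbhs (g, y) ((fun p : G * X => act p.1 p.2) @^-1` W).
  by apply: act_cont; apply: nbhd_of_open.
case=> -[A B] /= [nA nB] AB.
have [V [oV Vg VA]] := nbhs_open nA.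
have [V' [oV' Vy VB]] := nbhs_open nB.
exists V, V'; split=> // g' y' Vg' Vy'.
by apply: (AB (g', y')); split; [apply: VA | apply: VB].
Qed.

Lemma act_open_pre g (W : set X) : open W -> open (act g @^-1` W).
Proof.
move=> oW; apply: open_of_nbhd => y Wy.
have [V [V' [oV Vg oV' Vy H]]] := act_nbhd oW Wy.
by exists V'; split=> // z Vz; apply: H.
Qed.
End Act.

Section Main.
Variables (G X : topologicalType) (mul : G -> G -> G) (inv : G -> G) (one : G)
  (act : G -> X -> X).
Hypothesis act1 : forall x, act one x = x.
Hypothesis actM : forall g h x, act (mul g h) x = act g (act h x).
Hypothesis mulVg : forall g, mul (inv g) g = one.
Hypothesis mulgV : forall g, mul g (inv g) = one.
Hypothesis act_cont : continuous (fun p : G * X => act p.1 p.2).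
Hypothesis scat : scattered X.

Lemma actK g x : act (inv g) (act g x) = x.
Proof. by rewrite -actM mulVg act1. Qed.
Lemma actKV g x : act g (act (inv g) x) = x.
Proof. by rewrite -actM mulgV act1. Qed.

Lemma act_img g (W : set X) : act g @` W = act (inv g) @^-1` W.
Proof.
apply/seteqP; split=> z.
  by case=> w Ww <-; rewrite /= actK.
by move=> Wz; exists (act (inv g) z) => //; rewrite actKV.
Qed.

Lemma open_img g (W : set X) : open W -> open (act g @` W).
Proof. by move=> oW; rewrite act_img; apply: act_open_pre. Qed.

Lemma orbit_act A g z : Defs.orbit act A -> A z -> A (act g z).
Proof.
case=> x -> [h _ <-]; exists (mul g h) => //; by rewrite actM.
Qed.

Lemma orbit_self z : Defs.orbit act (range (fun g => act g z)) /\ range (fun g => act g z) z.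
Proof. by split; [exists z | exists one]. Qed.

Lemma orbit_disc A y : Defs.orbit act A -> A y ->
  exists V, [/\ open V, V y & forall z, V z -> A z -> z = y].
Proof.
move=> oA Ay.
have [a [Aa [V0 [oV0 V0A]]]] := scat (ex_intro _ y Ay).
have [g ag] : exists g, act g a = y.
  case: oA Ay Aa => x -> [g' _ <-] [h _ <-].
  by exists (mul g' (inv h)); rewrite actM actK.
exists (act g @` V0); split.
- exact: open_img.
- by exists a => //; have [] : (V0 `&` A) a by rewrite V0A.
- move=> z [w V0w <-] Az.
  have Aw : A w by rewrite -(actK g w); apply: orbit_act.
  have : (V0 `&` A) w by [].
  by rewrite V0A => ->.
Qed.


Definition fib (F : shsp G X) (v : car F) (y : X) := pts F v /\ Defs.proj F v = y.

Record Good (F : shsp G X) : Prop := {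
  g_zero : forall y, fib (szero F y) y;
  g_add : forall v w y, fib v y -> fib w y -> fib (sadd F v w) y;
  g_opp : forall v y, fib v y -> fib (sopp F v) y;
  g_act : forall g v y, fib v y -> fib (sact F g v) (act g y);
  g_assoc : forall u v w y, fib u y -> fib v y -> fib w y ->
     sadd F (sadd F u v) w = sadd F u (sadd F v w);
  g_comm : forall v w y, fib v y -> fib w y -> sadd F v w = sadd F w v;
  g_zl : forall v y, fib v y -> sadd F (szero F y) v = v;
  g_inv : forall v y, fib v y -> sadd F v (sopp F v) = szero F y;
  g_secz : forall W, Gamma F W (szero F);
  g_secadd : forall W s1 s2, Gamma F W s1 -> Gamma F W s2 ->
     Gamma F W (fun z => sadd F (s1 z) (s2 z));
  g_secopp : forall W s, Gamma F W s -> Gamma F W (fun z => sopp F (s z));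
  g_seczero : forall W s u, Gamma F W s -> W u -> s u = szero F u ->
     exists V, [/\ open V, V u & forall z, W z -> V z -> s z = szero F z];
  g_actadd : forall g v w y, fib v y -> fib w y ->
     sact F g (sadd F v w) = sadd F (sact F g v) (sact F g w);
  g_actzero : forall g y, sact F g (szero F y) = szero F (act g y);
  g_actopp : forall g v y, fib v y -> sact F g (sopp F v) = sopp F (sact F g v);
  g_sectr : forall g W s, Gamma F W s ->
     Gamma F (act g @` W) (fun z => sact F g (s (act (inv g) z)))
}.

Section Sheaf.
Variable F : shsp G X.
Local Notation Rep := (set X * S F)%type.
Local Notation orb := (Defs.orbit act).
Local Notation eqIF := (@eqI G X act F).
Definition sec (r : Rep) := secI act r.1 r.2.

Lemma Gamma_pt W s y : Gamma F W s -> W y -> fib (s y) y.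
Proof. by case=> H _ Wy; apply: H. Qed.

Lemma Gamma_sub W W' s : W' `<=` W -> Gamma F W s -> Gamma F W' s.
Proof.
move=> sub [H1 H2]; split=> [y /sub|y W'y Op oO Oy]; first exact: H1.
have [V [oV [Vy HV]]] := H2 y (sub _ W'y) Op oO Oy.
by exists V; split=> //; split=> // z /sub; apply: HV.
Qed.

Lemma Gamma_ext W s s' : (forall z, W z -> s z = s' z) -> Gamma F W s -> Gamma F W s'.
Proof.
move=> e [H1 H2]; split=> [y Wy|y Wy Op oO]; first by rewrite -e //; apply: H1.
rewrite -e // => Oy; have [V [oV [Vy HV]]] := H2 y Wy Op oO Oy.
by exists V; split=> //; split=> // z Wz Vz; rewrite -e //; apply: HV.
Qed.

Lemma Gamma_loc W s : (forall y, W y -> exists V, [/\ open V, V y & Gamma F (W `&` V) s]) ->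
  Gamma F W s.
Proof.
move=> H; split=> [y Wy|y Wy Op oO Oy].
  by have [V [_ Vy [H1 _]]] := H y Wy; apply: H1.
have [V [oV Vy [_ H2]]] := H y Wy.
have [V' [oV' [V'y HV']]] := H2 y (conj Wy Vy) Op oO Oy.
exists (V `&` V'); split; first exact: openI.
by split=> // z Wz [Vz V'z]; apply: HV'.
Qed.

Lemma secP (r : Rep) : sec r <-> open r.1 /\
  forall A, orb A -> forall z, r.1 z -> A z -> fib (r.2 A z) z.
Proof.
split=> [[o H]|[o H]]; split=> // A oA.
  by move=> z r1z Az; have [H1 _] := H A oA; apply: H1.
split=> [y [r1y Ay]|y [r1y Ay] Op oO Oy]; first exact: H.
have [V [oV Vy HV]] := orbit_disc oA Ay.
exists V; split=> //; split=> // z [_ Az] Vz.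
by rewrite (HV z Vz Az).
Qed.

Lemma sec_open r : sec r -> open r.1.
Proof. by case. Qed.

Lemma sec_fib r A z : sec r -> orb A -> r.1 z -> A z -> fib (r.2 A z) z.
Proof. by move=> /secP [_ H] oA rz Az; apply: H. Qed.

Definition binR (op : car F -> car F -> car F) (r1 r2 : Rep) : Rep :=
  (r1.1 `&` r2.1, fun A z => op (r1.2 A z) (r2.2 A z)).
Definition unR (f : car F -> car F) (r : Rep) : Rep := (r.1, fun A z => f (r.2 A z)).
Definition gR g (r : Rep) : Rep := (act g @` r.1, fun A z => sact F g (r.2 A (act (inv g) z))).
Definition zR : Rep := ([set: X], fun _ z => szero F z).
Definition resR (r : Rep) (V : set X) : Rep := (r.1 `&` V, r.2).

Lemma eqI_sym y r r' : eqIF y r r' -> eqIF y r' r.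
Proof.
case=> W [oW Wy sub H]; exists W; split=> //.
  by move=> z /sub [? ?].
by move=> A oA z Wz Az; rewrite H.
Qed.

Lemma eqI_trans y r r' r'' : eqIF y r r' -> eqIF y r' r'' -> eqIF y r r''.
Proof.
case=> W [oW Wy sub H] [W' [oW' W'y sub' H']]; exists (W `&` W'); split=> //.
- exact: openI.
- by move=> z [/sub [? _] /sub' [_ ?]].
- by move=> A oA z [Wz W'z] Az; rewrite H // H'.
Qed.

Lemma eqI_refl y r : open r.1 -> r.1 y -> eqIF y r r.
Proof. by move=> o ry; exists r.1; split. Qed.

Lemma eqI_dom y r r' : eqIF y r r' -> r.1 y /\ r'.1 y.
Proof. by case=> W [_ Wy sub _]; apply: sub. Qed.

Lemma eqI_loc y r r' : eqIF y r r' ->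
  exists W, [/\ open W, W y & forall z, W z -> eqIF z r r'].
Proof.
case=> W [oW Wy sub H]; exists W; split=> // z Wz.
by exists W; split.
Qed.

Lemma eqI_bin op y r1 r1' r2 r2' : eqIF y r1 r1' -> eqIF y r2 r2' ->
  eqIF y (binR op r1 r2) (binR op r1' r2').
Proof.
case=> W [oW Wy sub H] [W' [oW' W'y sub' H']]; exists (W `&` W'); split=> //.
- exact: openI.
- by move=> z [/sub [? ?] /sub' [? ?]].
- by move=> A oA z [Wz W'z] Az /=; rewrite H // H'.
Qed.

Lemma eqI_un f y r r' : eqIF y r r' -> eqIF y (unR f r) (unR f r').
Proof.
case=> W [oW Wy sub H]; exists W; split=> //.
by move=> A oA z Wz Az /=; rewrite H.
Qed.

Lemma eqI_gR g y r r' : eqIF y r r' -> eqIF (act g y) (gR g r) (gR g r').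
Proof.
case=> W [oW Wy sub H]; exists (act g @` W); split.
- exact: open_img.
- by exists y.
- by move=> z [w /sub [r1w r1'w] <-]; split; exists w.
- move=> A oA z [w Ww <-] Az /=; rewrite actK H //.
  by rewrite -(actK g w); apply: orbit_act.
Qed.

Lemma eqI_res y r V : open r.1 -> open V -> r.1 y -> V y -> eqIF y (resR r V) r.
Proof.
move=> o oV ry Vy; exists (r.1 `&` V); split=> //; first exact: openI.
by move=> z [? ?].
Qed.

Lemma eqI_ptw y (r r' : Rep) W : open W -> W y -> W `<=` r.1 `&` r'.1 ->
  (forall A z, orb A -> W z -> A z -> r.2 A z = r'.2 A z) -> eqIF y r r'.
Proof. by move=> oW Wy sub H; exists W; split=> // A oA z Wz Az; apply: H. Qed.

Definition PER (eqv : X -> Rep -> Rep -> Prop) :=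
  (forall y r r', sec r -> sec r' -> eqv y r r' -> eqv y r' r) /\
  (forall y r r' r'', sec r -> sec r' -> sec r'' -> eqv y r r' -> eqv y r' r'' -> eqv y r r'').
Definition REFL (eqv : X -> Rep -> Rep -> Prop) := forall y r, sec r -> r.1 y -> eqv y r r.

Lemma germ_eq eqv y r r' : PER eqv -> sec r -> sec r' -> eqv y r r' ->
  germ act eqv y r = germ act eqv y r'.
Proof.
move=> [Hs Ht] sr sr' e; congr pair; apply/seteqP; split=> q [sq eq]; split=> //.
  exact: Ht e.
by apply: Ht eq _ => //; apply: Hs.
Qed.

Lemma germ_rel eqv y r r' : REFL eqv -> sec r -> r.1 y ->
  germ act eqv y r = germ act eqv y r' -> eqv y r r'.
Proof.
move=> Hr sr ry e.
have : (germ act eqv y r).2 r by split=> //; apply: Hr.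
by rewrite e => -[].
Qed.


End Sheaf.

Section GoodF.
Variable F : shsp G X.
Hypothesis gF : Good F.
Local Notation Rep := (set X * S F)%type.
Local Notation orb := (Defs.orbit act).
Local Notation eqIF := (@eqI G X act F).
Local Notation eqCF := (@eqC G X act F).
Local Notation add := (sadd F).
Local Notation opp := (sopp F).
Local Notation zero := (szero F).
Local Notation sec := (@sec F).
Local Notation zR := (@zR F).

Ltac fibt := repeat first [assumption | apply: (g_zero gF) | apply: (g_add gF) | apply: (g_opp gF)].

Lemma addr0 v y : fib v y -> add v (zero y) = v.
Proof. by move=> fv; rewrite (g_comm gF fv (g_zero gF y)) (g_zl gF fv). Qed.

Lemma addNr v y : fib v y -> add (opp v) v = zero y.
Proof. by move=> fv; rewrite (g_comm gF (g_opp gF fv) fv) (g_inv gF fv). Qed.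

Lemma add_can a b c y : fib a y -> fib b y -> fib c y -> add a b = add a c -> b = c.
Proof.
move=> fa fb fc e.
rewrite -(g_zl gF fb) -(g_zl gF fc) -(addNr fa).
by rewrite (g_assoc gF (g_opp gF fa) fa fb) (g_assoc gF (g_opp gF fa) fa fc) e.
Qed.

Lemma add4 a b c d y : fib a y -> fib b y -> fib c y -> fib d y ->
  add (add a b) (add c d) = add (add a c) (add b d).
Proof.
move=> fa fb fc fd.
rewrite (g_assoc gF fa fb (g_add gF fc fd)) -(g_assoc gF fb fc fd).
rewrite (g_comm gF fb fc) (g_assoc gF fc fb fd).
by rewrite -(g_assoc gF fa fc (g_add gF fb fd)).
Qed.

Lemma opp_add a b y : fib a y -> fib b y -> opp (add a b) = add (opp a) (opp b).
Proof.
move=> fa fb; have fab := g_add gF fa fb.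
apply: (@add_can (add a b) _ _ y fab (g_opp gF fab) (g_add gF (g_opp gF fa) (g_opp gF fb))).
rewrite (g_inv gF fab) (add4 fa fb (g_opp gF fa) (g_opp gF fb)).
by rewrite (g_inv gF fa) (g_inv gF fb) (g_zl gF (g_zero gF y)).
Qed.

Lemma sec_add r1 r2 : sec r1 -> sec r2 -> sec (binR add r1 r2).
Proof.
move=> /secP [o1 H1] /secP [o2 H2]; apply/secP; split; first exact: openI.
by move=> A oA z [z1 z2] Az /=; apply: (g_add gF); [apply: H1|apply: H2].
Qed.

Lemma sec_opp r : sec r -> sec (unR opp r).
Proof.
move=> /secP [o1 H1]; apply/secP; split=> // A oA z z1 Az /=.
by apply: (g_opp gF); apply: H1.
Qed.

Lemma sec_gR g r : sec r -> sec (gR g r).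
Proof.
move=> /secP [o1 H1]; apply/secP; split; first exact: open_img.
move=> A oA z [w r1w <-] Az /=; rewrite actK; apply: (g_act gF); apply: H1 => //.
by rewrite -(actK g w); apply: orbit_act.
Qed.

Lemma sec_zR : sec zR.
Proof. by apply/secP; split=> [|A oA z _ _ /=]; [exact: openT | apply: (g_zero gF)]. Qed.

Lemma sec_res r V : sec r -> open V -> sec (resR r V).
Proof.
move=> /secP [o1 H1] oV; apply/secP; split; first exact: openI.
by move=> A oA z [z1 _] Az; apply: H1.
Qed.

Lemma eqC_dom y r r' : eqCF y r r' -> r.1 y /\ r'.1 y.
Proof. by case=> W [t [_ Wy sub _ _]]; apply: sub. Qed.

Lemma eqC_loc y r r' : eqCF y r r' ->
  exists W, [/\ open W, W y & forall z, W z -> eqCF z r r'].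
Proof. by case=> W [t [oW Wy sub gt H]]; exists W; split=> // z Wz; exists W, t. Qed.

Lemma eqC_refl : REFL eqCF.
Proof.
move=> y r sr ry; exists r.1, zero; split=> //; first exact: sec_open.
  exact: (g_secz gF).
by move=> A oA z rz Az; rewrite (addr0 (sec_fib sr oA rz Az)).
Qed.

Lemma eqC_of_eqI y r r' : sec r' -> eqIF y r r' -> eqCF y r r'.
Proof.
move=> sr' [W [oW Wy sub H]]; exists W, zero; split=> //; first exact: (g_secz gF).
move=> A oA z Wz Az; rewrite H //; have [_ r'z] := sub z Wz.
by rewrite (addr0 (sec_fib sr' oA r'z Az)).
Qed.

Lemma eqC_PER : PER eqCF.
Proof.
split.
- move=> y r r' sr sr' [W [t [oW Wy sub gt H]]].
  exists W, (fun z => opp (t z)); split=> //.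
  + by move=> z /sub [? ?].
  + exact: (g_secopp gF).
  + move=> A oA z Wz Az; have [r1 r'1] := sub z Wz.
    have fr' := sec_fib sr' oA r'1 Az; have ft := Gamma_pt gt Wz.
    rewrite H // (g_assoc gF fr' ft (g_opp gF ft)) (g_inv gF ft).
    by rewrite (addr0 fr').
- move=> y r r' r'' sr sr' sr'' [W [t [oW Wy sub gt H]]] [W' [t' [oW' W'y sub' gt' H']]].
  exists (W `&` W'), (fun z => add (t' z) (t z)); split=> //.
  + exact: openI.
  + by move=> z [/sub [? ?] /sub' [? ?]].
  + by apply: (g_secadd gF); [apply: (Gamma_sub _ gt') | apply: (Gamma_sub _ gt)]; move=> ? [].
  + move=> A oA z [Wz W'z] Az; have [r1 r'1] := sub z Wz; have [_ r''1] := sub' z W'z.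
    have fr'' := sec_fib sr'' oA r''1 Az.
    have ft := Gamma_pt gt Wz; have ft' := Gamma_pt gt' W'z.
    by rewrite H // H' // (g_assoc gF fr'' ft' ft).
Qed.

Lemma eqC_add y a b c d : sec a -> sec b -> sec c -> sec d ->
  eqCF y a c -> eqCF y b d -> eqCF y (binR add a b) (binR add c d).
Proof.
move=> sa sb sc sd [W [t [oW Wy sub gt H]]] [W' [t' [oW' W'y sub' gt' H']]].
exists (W `&` W'), (fun z => add (t z) (t' z)); split=> //.
- exact: openI.
- by move=> z [/sub [? ?] /sub' [? ?]]; split; split.
- by apply: (g_secadd gF); [apply: (Gamma_sub _ gt) | apply: (Gamma_sub _ gt')]; move=> ? [].
- move=> A oA z [Wz W'z] Az /=; have [a1 c1] := sub z Wz; have [b1 d1] := sub' z W'z.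
  rewrite H // H' //.
  by apply: add4; [apply: (sec_fib sc) | apply: (Gamma_pt gt) | apply: (sec_fib sd)
     | apply: (Gamma_pt gt')].
Qed.

Lemma eqC_opp y a c : sec a -> sec c -> eqCF y a c -> eqCF y (unR opp a) (unR opp c).
Proof.
move=> sa sc [W [t [oW Wy sub gt H]]].
exists W, (fun z => opp (t z)); split=> //; first exact: (g_secopp gF).
move=> A oA z Wz Az /=; have [a1 c1] := sub z Wz.
by rewrite H // (opp_add (sec_fib sc oA c1 Az) (Gamma_pt gt Wz)).
Qed.

Lemma eqC_gR g y a c : sec a -> sec c -> eqCF y a c ->
  eqCF (act g y) (gR g a) (gR g c).
Proof.
move=> sa sc [W [t [oW Wy sub gt H]]].
exists (act g @` W), (fun z => sact F g (t (act (inv g) z))); split.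
- exact: open_img.
- by exists y.
- by move=> z [w /sub [? ?] <-]; split; exists w.
- exact: (g_sectr gF).
- move=> A oA z [w Ww <-] Az /=; rewrite actK.
  have Aw : A w by rewrite -(actK g w); apply: orbit_act.
  have [a1 c1] := sub w Ww.
  by rewrite H // (g_actadd gF _ (sec_fib sc oA c1 Aw) (Gamma_pt gt Ww)).
Qed.

Lemma eqI_PER : PER eqIF.
Proof.
split; first by move=> y r r' _ _; apply: eqI_sym.
by move=> y r r' r'' _ _ _; apply: eqI_trans.
Qed.

Lemma eqI_REFL : REFL eqIF.
Proof. by move=> y r sr ry; apply: eqI_refl => //; apply: sec_open. Qed.

Section GermOps.
Variable eqv : X -> Rep -> Rep -> Prop.
Hypothesis eP : PER eqv.
Hypothesis eR : REFL eqv.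

Lemma germ_add (Hc : forall y a b c d, sec a -> sec b -> sec c -> sec d ->
    eqv y a c -> eqv y b d -> eqv y (binR add a b) (binR add c d))
  y r1 r2 : sec r1 -> sec r2 -> r1.1 y -> r2.1 y ->
  gadd act eqv (germ act eqv y r1) (germ act eqv y r2) = germ act eqv y (binR add r1 r2).
Proof.
move=> s1 s2 y1 y2; congr pair; apply/seteqP; split=> r [sr H]; split=> //.
  case: H => a [b [[sa ea] [sb eb] e]].
  apply: (eP.2 _ _ _ _ sr _ _ e); try apply: sec_add => //.
  exact: Hc.
by exists r1, r2; split=> //; split=> //; apply: eR.
Qed.

Lemma germ_opp (Hc : forall y a c, sec a -> sec c -> eqv y a c -> eqv y (unR opp a) (unR opp c))
  y r : sec r -> r.1 y ->
  gopp act eqv (germ act eqv y r) = germ act eqv y (unR opp r).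
Proof.
move=> s1 y1; congr pair; apply/seteqP; split=> q [sq H]; split=> //.
  case: H => a [[sa ea] e].
  apply: (eP.2 _ _ _ _ sq _ _ e); try apply: sec_opp => //.
  exact: Hc.
by exists r; split=> //; split=> //; apply: eR.
Qed.

Lemma germ_act (Hc : forall g y a c, sec a -> sec c -> eqv y a c ->
    eqv (act g y) (gR g a) (gR g c))
  g y r : sec r -> r.1 y ->
  gact inv act eqv g (germ act eqv y r) = germ act eqv (act g y) (gR g r).
Proof.
move=> s1 y1; congr pair; apply/seteqP; split=> q [sq H]; split=> //.
  case: H => a [[sa ea] e].
  apply: (eP.2 _ _ _ _ sq _ _ e); try apply: sec_gR => //.
  exact: Hc.
by exists r; split=> //; split=> //; apply: eR.
Qed.
End GermOps.

Lemma germI_add y r1 r2 : sec r1 -> sec r2 -> r1.1 y -> r2.1 y ->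
  gadd act eqIF (germ act eqIF y r1) (germ act eqIF y r2) = germ act eqIF y (binR add r1 r2).
Proof.
apply: germ_add; [exact: eqI_PER | exact: eqI_REFL|].
by move=> *; apply: eqI_bin.
Qed.

Lemma germI_act g y r : sec r -> r.1 y ->
  gact inv act eqIF g (germ act eqIF y r) = germ act eqIF (act g y) (gR g r).
Proof.
apply: germ_act; [exact: eqI_PER | exact: eqI_REFL|].
by move=> *; apply: eqI_gR.
Qed.

Lemma germC_add y r1 r2 : sec r1 -> sec r2 -> r1.1 y -> r2.1 y ->
  gadd act eqCF (germ act eqCF y r1) (germ act eqCF y r2) = germ act eqCF y (binR add r1 r2).
Proof. apply: germ_add; [exact: eqC_PER | exact: eqC_refl | exact: eqC_add]. Qed.

Lemma germC_opp y r : sec r -> r.1 y ->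
  gopp act eqCF (germ act eqCF y r) = germ act eqCF y (unR opp r).
Proof. apply: germ_opp; [exact: eqC_PER | exact: eqC_refl | exact: eqC_opp]. Qed.

Lemma germC_act g y r : sec r -> r.1 y ->
  gact inv act eqCF g (germ act eqCF y r) = germ act eqCF (act g y) (gR g r).
Proof. apply: germ_act; [exact: eqC_PER | exact: eqC_refl | exact: eqC_gR]. Qed.

Lemma qmap_germ y r : sec r -> r.1 y ->
  qmap act (germ act eqIF y r) = germ act eqCF y r.
Proof.
move=> sr ry; congr pair; apply/seteqP; split=> q [sq H]; split=> //.
  case: H => r0 [[s0 e0] e].
  apply: (eqC_PER.2 _ _ _ _ sq s0 sr e); exact: eqC_of_eqI.
by exists r; split; [split=> //; apply: eqI_REFL | ].
Qed.

End GoodF.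

Section EprodF.
Variable F : shsp G X.
Hypothesis gF : Good F.
Local Notation Rep := (set X * S F)%type.
Local Notation orb := (Defs.orbit act).
Local Notation eqIF := (@eqI G X act F).
Local Notation eqCF := (@eqC G X act F).
Local Notation add := (sadd F).
Local Notation opp := (sopp F).
Local Notation zero := (szero F).
Local Notation sec := (@sec F).
Local Notation zR := (@zR F).
Local Notation gI := (germ act eqIF).
Local Notation gC := (germ act eqCF).
Local Notation EprodF := (@Eprod G X inv act F).
Local Notation NOF := (@NO G X act F).

Definition EP (r : Rep) := sec r /\ forall z, r.1 z -> EprodF (gI z r).

Lemma gI_eq y r r' : sec r -> sec r' -> eqIF y r r' -> gI y r = gI y r'.
Proof. by move=> s s' e; apply: germ_eq => //; exact: eqI_PER. Qed.

Lemma gI_rel y r r' : sec r -> r.1 y -> gI y r = gI y r' -> eqIF y r r'.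
Proof. by move=> s ry e; apply: germ_rel e => //; exact: eqI_REFL. Qed.

Lemma gC_eq y r r' : sec r -> sec r' -> eqCF y r r' -> gC y r = gC y r'.
Proof. by move=> s s' e; apply: germ_eq => //; exact: (eqC_PER gF). Qed.

Lemma gC_rel y r r' : sec r -> r.1 y -> gC y r = gC y r' -> eqCF y r r'.
Proof. by move=> s ry e; apply: germ_rel e => //; exact: (eqC_refl gF). Qed.

Lemma gC_of_eqI y r r' : sec r -> sec r' -> eqIF y r r' -> gC y r = gC y r'.
Proof. by move=> s s' e; apply: gC_eq => //; apply: (eqC_of_eqI gF). Qed.

Lemma gI_res y r V : sec r -> open V -> r.1 y -> V y -> gI y (resR r V) = gI y r.
Proof.
move=> s oV ry Vy; apply: gI_eq => //; first exact: (sec_res s oV).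
by apply: eqI_res => //; apply: sec_open.
Qed.

Lemma Eprod_isgerm e : EprodF e -> isgermI act e.
Proof. by case=> O [[sub _] _ Oe]; apply: sub. Qed.

Lemma Eprod_rep e : EprodF e -> exists r, [/\ EP r, r.1 e.1 & e = gI e.1 r].
Proof.
case=> O [NOO GO Oe]; have [_ H] := NOO.
have [U [sg [s Ue ee HU]]] := H e Oe.
exists (U, sg); split=> //; split=> // z Uz.
by exists O; split=> //; apply: HU.
Qed.

Lemma NO_germs r : sec r -> NOF [set e | exists z, r.1 z /\ e = gI z r].
Proof.
case: r => U sg s; split.
  by move=> e [z [Uz ->]]; exists U, sg; split.
move=> e [z [Uz ->]]; exists U, sg; split=> //.
by move=> y Uy; exists y.
Qed.

Lemma NO_near O r z : NOF O -> O (gI z r) -> sec r -> r.1 z ->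
  exists W, [/\ open W, W z & forall u, W u -> r.1 u -> O (gI u r)].
Proof.
move=> [_ H] Oz s rz; have [U [sg [sU Uz ee HU]]] := H _ Oz.
have e : eqIF z r (U, sg) by apply: gI_rel.
have [W [oW Wz HW]] := eqI_loc e.
exists W; split=> // u Wu ru.
have [_ Uu] := eqI_dom (HW u Wu).
by rewrite (@gI_eq u r (U, sg) s sU (HW u Wu)); apply: HU.
Qed.

Lemma Eprod_act g e : EprodF e -> EprodF (gact inv act eqIF g e).
Proof. by case=> O [NOO [G1 G2] Oe]; exists O; split=> //; apply: G1. Qed.

Lemma EP_res r V : EP r -> open V -> EP (resR r V).
Proof.
case=> s H oV; split; first exact: sec_res.
by move=> z [rz Vz]; rewrite gI_res //; apply: H.
Qed.

Lemma EP_gR g r : EP r -> EP (gR g r).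
Proof.
case=> s H; split; first exact: (sec_gR gF).
move=> z [w rw <-].
rewrite -(germI_act gF) //; apply: Eprod_act; exact: H.
Qed.


Lemma EP_inv (phi : S F) : sec ([set: X], phi) ->
  (forall g A z, orb A -> A z -> sact F g (phi A (act (inv g) z)) = phi A z) ->
  EP ([set: X], phi).
Proof.
move=> s Hinv; set r := ([set: X], phi).
have act_germ : forall g z, gact inv act eqIF g (gI z r) = gI (act g z) r.
  move=> g z; rewrite germI_act //; apply: gI_eq; [exact: (sec_gR gF) | exact: s | ].
  apply: (@eqI_ptw _ _ _ _ setT) => //; first exact: openT.
    by move=> u _; split=> //; exists (act (inv g) u) => //; rewrite actKV.
  by move=> A u oA _ Au /=; apply: Hinv.
set O := [set e | exists z, r.1 z /\ e = gI z r].
have NOO : NOF O by apply: NO_germs.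
split=> // z _; exists O; split=> //; last by exists z.
split.
  by move=> g e [w [_ ->]]; exists (act g w); split=> //; rewrite act_germ.
move=> g e [w [_ ->]] N NON; rewrite act_germ => Ngw.
have [W [oW Wgw HW]] := NO_near NON Ngw s I.
have [V [V' [oV Vg oV' V'w HVV]]] := act_nbhd act_cont oW Wgw.
exists V, [set e | exists u, (resR r V').1 u /\ e = gI u (resR r V')]; split=> //.
- by apply: NO_germs; apply: sec_res.
- by exists w; split; [split | rewrite gI_res].
- move=> g' e' Vg' [u [[_ V'u] ->]] _.
  rewrite gI_res // act_germ; apply: HW => //; exact: HVV.
Qed.

Section BinOp.
Variable op : car F -> car F -> car F.
Hypothesis op_fib : forall v w y, fib v y -> fib w y -> fib (op v w) y.
Hypothesis op_act : forall g v w y, fib v y -> fib w y ->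
  sact F g (op v w) = op (sact F g v) (sact F g w).

Lemma sec_bin a b : sec a -> sec b -> sec (binR op a b).
Proof.
move=> /secP [o1 H1] /secP [o2 H2]; apply/secP; split; first exact: openI.
by move=> A oA z [z1 z2] Az /=; apply: op_fib; [apply: H1|apply: H2].
Qed.

Lemma gR_bin g a b y : sec a -> sec b -> (binR op a b).1 y ->
  gI (act g y) (gR g (binR op a b)) = gI (act g y) (binR op (gR g a) (gR g b)).
Proof.
move=> sa sb yab; apply: gI_eq.
- by apply: (sec_gR gF); apply: sec_bin.
- by apply: sec_bin; apply: (sec_gR gF).
apply: (@eqI_ptw _ _ _ _ (act g @` (a.1 `&` b.1))).
- by apply: open_img; apply: openI; apply: sec_open.
- by exists y.
- by move=> z [u [au bu] <-]; split; [exists u | split; exists u].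
- move=> A z oA [u [au bu] <-] Az /=; rewrite actK.
  have Au : A u by rewrite -(actK g u); apply: orbit_act.
  by apply: op_act; [apply: (sec_fib sa) | apply: (sec_fib sb)].
Qed.

Lemma EP_bin a b : EP a -> EP b -> EP (binR op a b).
Proof.
move=> [sa Ha] [sb Hb]; split; first exact: sec_bin.
move=> z [az bz].
have [O1 [NO1 [G11 G12] O1z]] := Ha z az.
have [O2 [NO2 [G21 G22] O2z]] := Hb z bz.
have [W1 [oW1 W1z HW1]] := NO_near NO1 O1z sa az.
have [W2 [oW2 W2z HW2]] := NO_near NO2 O2z sb bz.
set O := [set e | exists ra rb w, [/\ sec ra, sec rb,
  (forall u, ra.1 u -> O1 (gI u ra)), (forall u, rb.1 u -> O2 (gI u rb))
  & [/\ ra.1 w, rb.1 w & e = gI w (binR op ra rb)]]].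
have NOO : NOF O.
  split.
    move=> e [ra [rb [w [s1 s2 _ _ [w1 w2 ->]]]]].
    exists (ra.1 `&` rb.1), (fun A z => op (ra.2 A z) (rb.2 A z)); split=> //.
    exact: (sec_bin s1 s2).
  move=> e [ra [rb [w [s1 s2 h1 h2 [w1 w2 ->]]]]].
  exists (ra.1 `&` rb.1), (fun A z => op (ra.2 A z) (rb.2 A z)); split=> //.
    exact: (sec_bin s1 s2).
  by move=> u [u1 u2]; exists ra, rb, u; split.
exists O; split=> //; last first.
  exists (resR a W1), (resR b W2), z; split.
  - exact: sec_res.
  - exact: sec_res.
  - by move=> u [au W1u]; rewrite gI_res //; apply: HW1.
  - by move=> u [bu W2u]; rewrite gI_res //; apply: HW2.
  split; [by split | by split |].
  apply: gI_eq; [exact: sec_bin | by apply: sec_bin; apply: sec_res |].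
  apply: eqI_bin; apply: eqI_sym; apply: eqI_res => //; exact: sec_open.
split.
  move=> g e [ra [rb [w [s1 s2 h1 h2 [w1 w2 ->]]]]].
  rewrite germI_act //; last exact: sec_bin.
  rewrite gR_bin //.
  exists (gR g ra), (gR g rb), (act g w); split.
  - exact: (sec_gR gF).
  - exact: (sec_gR gF).
  - by move=> u [v rv <-]; rewrite -germI_act //; apply: G11; apply: h1.
  - by move=> u [v rv <-]; rewrite -germI_act //; apply: G21; apply: h2.
  by split=> //; exists w.
move=> g e [ra [rb [w [s1 s2 h1 h2 [w1 w2 ->]]]]] N NON.
set rho := binR op (gR g ra) (gR g rb).
have srho : sec rho by apply: sec_bin; apply: (sec_gR gF).
have eact : gact inv act eqIF g (gI w (binR op ra rb)) = gI (act g w) rho.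
  by rewrite germI_act //; [rewrite gR_bin | exact: sec_bin].
rewrite eact => Nrho.
have rhow : rho.1 (act g w) by split; exists w.
have [W [oW Ww HW]] := NO_near NON Nrho srho rhow.
set ra' := resR (gR g ra) W; set rb' := resR (gR g rb) W.
have sra' : sec ra' by apply: sec_res => //; apply: (sec_gR gF).
have srb' : sec rb' by apply: sec_res => //; apply: (sec_gR gF).
have N1 := NO_germs sra'; have N2 := NO_germs srb'.
have N1a : [set e | exists u, ra'.1 u /\ e = gI u ra'] (gact inv act eqIF g (gI w ra)).
  exists (act g w); split; first by split=> //; exists w.
  by rewrite germI_act // gI_res //; [exact: (sec_gR gF) | exists w].
have N2b : [set e | exists u, rb'.1 u /\ e = gI u rb'] (gact inv act eqIF g (gI w rb)).
  exists (act g w); split; first by split=> //; exists w.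
  by rewrite germI_act // gI_res //; [exact: (sec_gR gF) | exists w].
have [V1 [M1 [oV1 V1g NOM1 M1a HM1]]] := G12 g (gI w ra) (h1 w w1) _ N1 N1a.
have [V2 [M2 [oV2 V2g NOM2 M2b HM2]]] := G22 g (gI w rb) (h2 w w2) _ N2 N2b.
have [U1 [oU1 U1w HU1]] := NO_near NOM1 M1a s1 w1.
have [U2 [oU2 U2w HU2]] := NO_near NOM2 M2b s2 w2.
have oU : open (U1 `&` U2) by apply: openI.
set rr := resR (binR op ra rb) (U1 `&` U2).
have srr : sec rr by apply: sec_res => //; apply: sec_bin.
exists (V1 `&` V2), [set e | exists u, rr.1 u /\ e = gI u rr]; split.
- exact: openI.
- by split.
- exact: NO_germs.
- exists w; split; first by split; split.
  by rewrite /rr gI_res //; try exact: sec_bin; split.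
move=> g' e' [Vg'1 Vg'2] [u [[[u1 u2] [U1u U2u]] ->]] _.
have -> : gI u rr = gI u (binR op ra rb) by rewrite /rr gI_res //; try exact: sec_bin; split.
rewrite germI_act //; try exact: sec_bin; try by split.
rewrite gR_bin //; try by split.
have := HM1 g' (gI u ra) Vg'1 (HU1 u U1u u1) (h1 u u1).
case=> u' [[gu Wu'] e1]; rewrite germI_act // in e1.
have eu : act g' u = u' by have := congr1 fst e1.
rewrite eu gI_res // in e1; last exact: (sec_gR gF).
have := HM2 g' (gI u rb) Vg'2 (HU2 u U2u u2) (h2 u u2).
case=> u'' [[gu' Wu''] e2]; rewrite germI_act // in e2.
have eu' : act g' u = u'' by have := congr1 fst e2.
rewrite -eu' eu gI_res // in e2; try exact: (sec_gR gF); try by rewrite -eu eu'.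
have d1 : (gR g' ra).1 u' by exists u.
have d2 : (gR g' rb).1 u' by exists u.
have E1 := gI_rel (sec_gR gF g' s1) d1 e1.
have E2 := gI_rel (sec_gR gF g' s2) d2 e2.
rewrite eu (gI_eq _ srho (eqI_bin op E1 E2)); last by apply: sec_bin; apply: (sec_gR gF).
apply: HW => //; split=> //.
by rewrite -eu eu'.
Qed.
End BinOp.

Lemma SecRepI r W : EP r -> W `<=` r.1 -> Gamma (I0 inv act F) W (fun z => gI z r).
Proof.
move=> [sr Hr] sub; split.
  by move=> y Wy; split=> //; apply: Hr; apply: sub.
move=> y Wy Op [O' [NO' ->]] [O'y Ey].
have [W' [oW' W'y HW']] := NO_near NO' O'y sr (sub y Wy).
exists W'; split=> //; split=> // z Wz W'z; split.
  by apply: HW' => //; apply: sub.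
by apply: Hr; apply: sub.
Qed.

Lemma liftI W t y : Gamma (I0 inv act F) W t -> W y ->
  exists r V, [/\ EP r, open V, V y & forall z, W z -> V z -> r.1 z /\ t z = gI z r].
Proof.
move=> [H1 H2] Wy; have [py fy] := H1 y Wy.
have [r [EPr ry ty]] := Eprod_rep py.
have sr := EPr.1.
rewrite /= in fy; rewrite fy in ry ty.
set O := [set e | exists z, r.1 z /\ e = gI z r] `&` EprodF.
have oO : sopen (I0 inv act F) O by exists [set e | exists z, r.1 z /\ e = gI z r]; split=> //; apply: NO_germs.
have [V [oV [Vy HV]]] := H2 y Wy O oO (conj (ex_intro _ y (conj ry ty)) py).
exists r, V; split=> // z Wz Vz.
have [[u [ru tz]] _] := HV z Wz Vz.
have [_ fz] := H1 z Wz; rewrite /= tz in fz.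
have uz : u = z := fz.
by subst z; split.
Qed.

Lemma fibC v y : @fib (Coker inv act F) v y <-> exists r, [/\ EP r, r.1 y & v = gC y r].
Proof.
split.
  case=> -[e Ee <-] fy; have [r [EPr re ee]] := Eprod_rep Ee.
  rewrite /= in fy; rewrite ee qmap_germ // in fy *; last exact: EPr.1.
  by exists r; split=> //; rewrite -fy.
case=> r [EPr ry ->]; split=> //.
exists (gI y r); first by apply: EPr.2.
by apply: qmap_germ => //; exact: EPr.1.
Qed.

Lemma SecOpenC r : EP r -> sopen (Coker inv act F) [set v | exists z, r.1 z /\ v = gC z r].
Proof.
move=> [sr Hr]; split.
  move=> v [z [rz ->]]; exists (gI z r); first by apply: Hr.
  exact: qmap_germ.
set P := [set e | EprodF e /\ (exists z, r.1 z /\ qmap act e = gC z r)].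
exists P; split; last first.
  by apply/seteqP; split=> e; [move=> Pe; split=> //; case: Pe | case].
split.
  by move=> e [Ee _]; apply: Eprod_isgerm.
move=> e [Ee [z [rz qe]]].
have [r' [[sr' Hr'] r'e ee]] := Eprod_rep Ee.
rewrite ee qmap_germ // in qe.
have ez : e.1 = z by have := congr1 fst qe.
rewrite ez in qe r'e ee.
have E := gC_rel sr' r'e qe.
have [W [oW Wz HW]] := eqC_loc E.
have oWr : open (W `&` r.1) by apply: openI => //; apply: sec_open.
exists (r'.1 `&` (W `&` r.1)), r'.2; split.
- by apply: (sec_res sr').
- by rewrite ez; split=> //; split.
- by rewrite ez ee; symmetry; apply: (@gI_res z r' (W `&` r.1)).
move=> u [r'u [Wu ru]]; split.
  by rewrite (@gI_res u r' (W `&` r.1)) //; exact: Hr'.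
exists u; split=> //.
rewrite qmap_germ //; last by apply: (sec_res sr').
apply: gC_eq => //; first by apply: (sec_res sr').
apply: ((eqC_PER gF).2 _ _ r') => //; first by apply: (sec_res sr').
  apply: (eqC_of_eqI gF) => //; apply: eqI_res => //; exact: sec_open.
exact: HW.
Qed.

Lemma SecRepC r W : EP r -> W `<=` r.1 -> Gamma (Coker inv act F) W (fun z => gC z r).
Proof.
move=> EPr sub; split.
  by move=> y Wy; apply/fibC; exists r; split=> //; apply: sub.
have [sr Hr] := EPr.
move=> y Wy Op [_ [O' [NO' eP]]] Oy.
have Py : [set e | EprodF e /\ Op (qmap act e)] (gI y r).
  by split; [apply: Hr; apply: sub | rewrite qmap_germ //; apply: sub].
rewrite eP in Py; case: Py => O'y _.
have [W' [oW' W'y HW']] := NO_near NO' O'y sr (sub y Wy).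
exists W'; split=> //; split=> // z Wz W'z.
have : [set e | EprodF e /\ Op (qmap act e)] (gI z r).
  by rewrite eP; split; [apply: HW' => //; apply: sub | apply: Hr; apply: sub].
by case=> _; rewrite qmap_germ //; apply: sub.
Qed.

Lemma liftC W s y : Gamma (Coker inv act F) W s -> W y ->
  exists r V, [/\ EP r, open V, V y & forall z, W z -> V z -> r.1 z /\ s z = gC z r].
Proof.
move=> gs Wy; have /fibC [r [EPr ry sy]] := Gamma_pt gs Wy.
have [_ H2] := gs.
have [V [oV [Vy HV]]] := H2 y Wy _ (SecOpenC EPr) (ex_intro _ y (conj ry sy)).
exists r, V; split=> // z Wz Vz.
have [u [ru szu]] := HV z Wz Vz.
have [_ fz] := Gamma_pt gs Wz; rewrite /= szu in fz.
have uz : u = z := fz.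
by subst z; split.
Qed.

Local Notation C := (Coker inv act F).

Lemma EP_add a b : EP a -> EP b -> EP (binR add a b).
Proof. by apply: EP_bin; [apply: (g_add gF) | apply: (g_actadd gF)]. Qed.

Lemma EP_zR : EP zR.
Proof.
apply: EP_inv; first exact: (sec_zR gF).
by move=> g A z _ _; rewrite (g_actzero gF) actKV.
Qed.

Lemma EP_opp a : EP a -> EP (unR opp a).
Proof.
move=> EPa; have [sa Ha] := EPa.
have H := @EP_bin (fun v _ => opp v) (fun v w y fv _ => g_opp gF fv)
  (fun g v w y fv _ => g_actopp gF g fv) a a EPa EPa.
split; first exact: (sec_opp gF).
move=> z az.
have <- : gI z (binR (fun v _ => opp v) a a) = gI z (unR opp a).
  apply: gI_eq; [exact: H.1 | exact: (sec_opp gF) |].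
  apply: (@eqI_ptw _ _ _ _ a.1) => //; first exact: sec_open.
exact: (H.2 z (conj az az)).
Qed.

Lemma eqI_gR_bin (op : car F -> car F -> car F)
  (op_fib : forall v w y, fib v y -> fib w y -> fib (op v w) y)
  (op_act : forall g v w y, fib v y -> fib w y ->
     sact F g (op v w) = op (sact F g v) (sact F g w)) g a b y :
  sec a -> sec b -> (binR op a b).1 y ->
  eqIF (act g y) (gR g (binR op a b)) (binR op (gR g a) (gR g b)).
Proof.
move=> sa sb yab; apply: gI_rel.
- by apply: (sec_gR gF); apply: sec_bin.
- by exists y.
- exact: gR_bin.
Qed.

Lemma fibC_zero y : @fib C (szero C y) y.
Proof. by apply/fibC; exists zR; split=> //; exact: EP_zR. Qed.

Lemma Good_Coker : Good C.
Proof.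
have fibC' := fibC.
split.
- exact: fibC_zero.
- move=> v w y /fibC [a [EPa ay ->]] /fibC [b [EPb bb ->]] /=.
  rewrite germC_add //; try exact: EPa.1; try exact: EPb.1.
  by apply/fibC; exists (binR add a b); split=> //; apply: EP_add.
- move=> v y /fibC [a [EPa ay ->]] /=.
  rewrite germC_opp //; last exact: EPa.1.
  by apply/fibC; exists (unR opp a); split=> //; apply: EP_opp.
- move=> g v y /fibC [a [EPa ay ->]] /=.
  rewrite germC_act //; last exact: EPa.1.
  apply/fibC; exists (gR g a); split=> //; first exact: EP_gR.
  by exists y.
- move=> u v w y /fibC [a [EPa ay ->]] /fibC [b [EPb bb ->]] /fibC [c [EPc cy ->]] /=.
  have sa := EPa.1; have sb := EPb.1; have sc := EPc.1.
  rewrite !germC_add //; try (by apply: (sec_add gF)); try (by split).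
  apply: gC_of_eqI; try (by do ! apply: (sec_add gF)).
  apply: (@eqI_ptw _ _ _ _ (a.1 `&` b.1 `&` c.1)).
  + by apply: openI; [apply: openI|]; apply: sec_open.
  + by split; [split|].
  + by move=> z [[az bz] cz]; split; split=> //; split.
  + move=> A z oA [[az bz] cz] Az /=.
    by apply: (g_assoc gF); apply: sec_fib.
- move=> v w y /fibC [a [EPa ay ->]] /fibC [b [EPb bb ->]] /=.
  have sa := EPa.1; have sb := EPb.1.
  rewrite !germC_add //.
  apply: gC_of_eqI; try (by apply: (sec_add gF)).
  apply: (@eqI_ptw _ _ _ _ (a.1 `&` b.1)).
  + by apply: openI; apply: sec_open.
  + by split.
  + by move=> z [az bz]; split; split.
  + by move=> A z oA [az bz] Az /=; apply: (g_comm gF); apply: sec_fib.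
- move=> v y /fibC [a [EPa ay ->]] /=.
  have sa := EPa.1.
  rewrite /gzero (germC_add gF (sec_zR gF) sa) //.
  apply: gC_of_eqI => //; first by apply: (sec_add gF) => //; apply: (sec_zR gF).
  apply: (@eqI_ptw _ _ _ _ a.1) => //; first exact: sec_open.
  by move=> A z oA az Az /=; apply: (g_zl gF); apply: sec_fib.
- move=> v y /fibC [a [EPa ay ->]] /=.
  have sa := EPa.1.
  rewrite germC_opp // germC_add //; last exact: (sec_opp gF).
  apply: gC_of_eqI => //; [by apply: (sec_add gF) => //; apply: (sec_opp gF) | exact: (sec_zR gF)|].
  apply: (@eqI_ptw _ _ _ _ a.1) => //; first exact: sec_open.
  by move=> A z oA az Az /=; apply: (g_inv gF); apply: sec_fib.
- move=> W; apply: (@Gamma_sub _ [set: X]) => //.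
  exact: (SecRepC EP_zR).
- move=> W s1 s2 g1 g2; apply: Gamma_loc => y Wy.
  have [r1 [V1 [EP1 oV1 V1y H1]]] := liftC g1 Wy.
  have [r2 [V2 [EP2 oV2 V2y H2]]] := liftC g2 Wy.
  exists (V1 `&` V2); split=> //; first exact: openI.
  apply: (@Gamma_ext C _ (fun z => gC z (binR add r1 r2))).
    move=> z [Wz [V1z V2z]]; have [r1z ->] := H1 z Wz V1z; have [r2z ->] := H2 z Wz V2z.
    by rewrite /= germC_add //; [exact: EP1.1 | exact: EP2.1].
  apply: SecRepC; first exact: EP_add.
  by move=> z [Wz [V1z V2z]]; split; [apply: (H1 z Wz V1z).1 | apply: (H2 z Wz V2z).1].
- move=> W s1 g1; apply: Gamma_loc => y Wy.
  have [r1 [V1 [EP1 oV1 V1y H1]]] := liftC g1 Wy.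
  exists V1; split=> //.
  apply: (@Gamma_ext C _ (fun z => gC z (unR opp r1))).
    move=> z [Wz V1z]; have [r1z ->] := H1 z Wz V1z.
    by rewrite /= germC_opp //; exact: EP1.1.
  apply: SecRepC; first exact: EP_opp.
  by move=> z [Wz V1z]; apply: (H1 z Wz V1z).1.
- move=> W s u gs Wu su.
  have [_ H2] := gs.
  have [V [oV [Vu HV]]] := H2 u Wu _ (SecOpenC EP_zR) (ex_intro _ u (conj I su)).
  exists V; split=> // z Wz Vz.
  have [u' [_ szu]] := HV z Wz Vz.
  have [_ fz] := Gamma_pt gs Wz; rewrite /= szu in fz.
  have uz : u' = z := fz.
  by subst u'.
- move=> g v w y /fibC [a [EPa ay ->]] /fibC [b [EPb bb ->]] /=.
  have sa := EPa.1; have sb := EPb.1.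
  rewrite germC_add // !germC_act //; last by apply: (sec_add gF).
  rewrite germC_add //; try (by apply: (sec_gR gF)); try (by exists y).
  apply: gC_of_eqI.
  + by apply: (sec_gR gF); apply: (sec_add gF).
  + by apply: (sec_add gF); apply: (sec_gR gF).
  apply: eqI_gR_bin => //; first exact: (g_add gF).
  exact: (g_actadd gF).
- move=> g y /=; rewrite /gzero germC_act //; last exact: (sec_zR gF).
  apply: gC_of_eqI; [exact: (sec_gR gF g (sec_zR gF)) | exact: (sec_zR gF) |].
  apply: (@eqI_ptw _ _ _ _ setT) => //; first exact: openT.
    by move=> z _; split=> //; exists (act (inv g) z) => //; rewrite actKV.
  by move=> A z _ _ _ /=; rewrite (g_actzero gF) actKV.
- move=> g v y /fibC [a [EPa ay ->]] /=.
  have sa := EPa.1.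
  rewrite germC_opp // !germC_act //; last exact: (sec_opp gF).
  rewrite germC_opp //; [| exact: (sec_gR gF) | by exists y].
  apply: gC_of_eqI.
  + by apply: (sec_gR gF); apply: (sec_opp gF).
  + by apply: (sec_opp gF); apply: (sec_gR gF).
  apply: (@eqI_ptw _ _ _ _ (act g @` a.1)) => //.
  + by apply: open_img; apply: sec_open.
  move=> A z oA [u au <-] Az /=; rewrite actK.
  have Au : A u by rewrite -(actK g u); apply: orbit_act.
  by apply: (g_actopp gF); apply: sec_fib.
- move=> g W s gs; apply: Gamma_loc => z0 [w0 Ww0 <-].
  have [r [V [EPr oV Vw0 H]]] := liftC gs Ww0.
  exists (act g @` V); split; [exact: open_img | by exists w0 |].
  apply: (@Gamma_ext C _ (fun z => gC z (gR g r))).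
    move=> z [[w Ww <-] [w' Vw' ew]].
    rewrite actK; have ww : w' = w by rewrite -(actK g w') ew actK.
    subst w'; have [rw ->] := H w Ww Vw'.
    by rewrite /= germC_act //; exact: EPr.1.
  apply: SecRepC; first exact: EP_gR.
  move=> z [[w Ww <-] [w' Vw' ew]].
  have ww : w' = w by rewrite -(actK g w') ew actK.
  subst w'; exists w => //; exact: (H w Ww Vw').1.
Qed.
End EprodF.

Section ConstQ.
Local Notation Q := (constQ act).

Lemma constQ_lc W s : Gamma Q W s -> forall y, W y ->
  exists V, [/\ open V, V y & forall z, W z -> V z -> s z = (z, (s y).2)].
Proof.
move=> gs y Wy; have [_ H2] := gs.
have oO : sopen Q [set e : X * rat | e.2 = (s y).2].
  by move=> e /= e2; exists setT; split; [exact: openT | split].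
have [V [oV [Vy HV]]] := H2 y Wy _ oO (erefl _).
exists V; split=> // z Wz Vz; have /= e2 := HV z Wz Vz.
have [_ /= e1] := Gamma_pt gs Wz.
by move: e1 e2; case: (s z) => a b /= -> ->.
Qed.

Lemma constQ_Gamma W s : (forall y, W y -> (s y).1 = y) ->
  (forall y, W y -> exists V, [/\ open V, V y & forall z, W z -> V z -> (s z).2 = (s y).2]) ->
  Gamma Q W s.
Proof.
move=> H1 H2; split=> [y Wy|y Wy Op oO Oy]; first by split=> //; apply: H1.
have [V0 [oV0 [V0y HV0]]] := oO _ Oy.
have [V [oV Vy HV]] := H2 y Wy.
rewrite H1 // in V0y HV0.
exists (V `&` V0); split; first exact: openI.
split; first by split.
move=> z Wz [Vz V0z].
have -> : s z = (z, (s y).2).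
  by move: (H1 z Wz) (HV z Wz Vz); case: (s z) => a b /= -> ->.
by apply: HV0.
Qed.

Lemma Good_constQ : Good Q.
Proof.
split.
- by [].
- by move=> v w y [_ ?] [_ ?].
- by move=> v y [_ ?].
- by move=> g v y [_ /= ->].
- by move=> u v w y _ _ _ /=; rewrite GRing.addrA.
- by move=> v w y [_ /= e1] [_ /= e2]; rewrite e1 e2 GRing.addrC.
- by move=> [v1 v2] y [_ /= ->]; rewrite GRing.add0r.
- by move=> [v1 v2] y [_ /= ->]; rewrite GRing.subrr.
- move=> W; apply: constQ_Gamma => // y Wy.
  by exists setT; split; [exact: openT | |].
- move=> W s1 s2 g1 g2; apply: constQ_Gamma => [y Wy|y Wy] /=.
    exact: (Gamma_pt g1 Wy).2.
  have [V1 [oV1 V1y H1]] := constQ_lc g1 Wy.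
  have [V2 [oV2 V2y H2]] := constQ_lc g2 Wy.
  exists (V1 `&` V2); split; [exact: openI | by split |].
  by move=> z Wz [V1z V2z]; rewrite H1 // H2.
- move=> W s1 g1; apply: constQ_Gamma => [y Wy|y Wy] /=.
    exact: (Gamma_pt g1 Wy).2.
  have [V1 [oV1 V1y H1]] := constQ_lc g1 Wy.
  exists V1; split=> // z Wz V1z; by rewrite H1.
- move=> W s u gs Wu su.
  have [V [oV Vu H]] := constQ_lc gs Wu.
  by exists V; split=> // z Wz Vz; rewrite H // su.
- by [].
- by [].
- by [].
- move=> g W s gs; apply: constQ_Gamma => [y [w Ww <-]|y [w Ww <-]] /=.
    by rewrite actK; have := (Gamma_pt gs Ww).2; rewrite /= => ->.
  have [V [oV Vw H]] := constQ_lc gs Ww.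
  exists (act g @` V); split; [exact: open_img | by exists w |].
  move=> z [w' Ww' <-] [w'' Vw'' e].
  have ww : w'' = w' by rewrite -(actK g w'') e actK.
  subst w''.
  by rewrite !actK H.
Qed.
End ConstQ.

Lemma Good_Cs k : Good (Cs inv act k).
Proof.
elim: k => [|k IH]; first exact: Good_constQ.
exact: (Good_Coker IH).
Qed.

Lemma cbX_S k : @cbX X k.+1 = cb_deriv (@cbX X k).
Proof. by []. Qed.

Lemma cbX_sub k : @cbX X k.+1 `<=` @cbX X k.
Proof. by rewrite cbX_S => z []. Qed.

Lemma cbX_mono i k : (i <= k)%N -> @cbX X k `<=` @cbX X i.
Proof.
elim: k => [|k IH]; first by rewrite leqn0 => /eqP ->.
rewrite leq_eqVlt => /orP [/eqP -> //| ]; rewrite ltnS => /IH H z /cbX_sub; exact: H.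
Qed.

Lemma cbX_act k g z : @cbX X k z -> @cbX X k (act g z).
Proof.
move: g z; elim: k => [//|k IH] g z.
rewrite !cbX_S => -[cz niso]; split; first exact: IH.
move=> [_ [U [oU HU]]]; apply: niso; split=> //.
exists (act (inv g) @` U); split; first exact: open_img.
apply/seteqP; split=> w.
  case=> -[u Uu <-] cw.
  have cu : @cbX X k u by rewrite -(actKV g u); apply: IH.
  have : (U `&` @cbX X k) u by [].
  by rewrite HU => ->; rewrite actK.
move=> ->; split; last exact: cz.
by exists (act g z); [have [] : (U `&` @cbX X k) (act g z) by rewrite HU | rewrite actK].
Qed.

Lemma cbX_actE k g z : @cbX X k (act g z) <-> @cbX X k z.
Proof. by split=> [H|]; [rewrite -(actK g z); apply: cbX_act | apply: cbX_act]. Qed.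

Lemma height_actE k g z : height (act g z) k <-> height z k.
Proof. by rewrite /height !cbX_actE. Qed.

Lemma dense_height k x (W : set X) : @cbX X k.+1 x -> open W -> W x ->
  exists v, W v /\ height v k.
Proof.
rewrite cbX_S => -[cx _] oW Wx.
have [v [[Wv cv] [V [oV HV]]]] := scat (ex_intro _ x (conj Wx cx) : (W `&` @cbX X k) !=set0).
exists v; split=> //; split=> //.
rewrite cbX_S => -[_]; apply; split=> //.
exists (V `&` W); split; first exact: openI.
apply/seteqP; split=> w.
  by case=> -[Vw Ww] cw; have : (V `&` (W `&` @cbX X k)) w by []; rewrite HV.
move=> ->; have : (V `&` (W `&` @cbX X k)) v by rewrite HV.
by case=> Vv [Wv' cv']; split.
Qed.

Lemma not_height_S k x : @cbX X k.+1 x -> ~ height x k.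
Proof. by move=> c [_]; apply. Qed.

Definition phif_of k (c : X -> car (Cs inv act k)) (z : X) : car (Cs inv act k) :=
  if pselect (height z k) then c z else szero (Cs inv act k) z.

Fixpoint cc (k : nat) : X -> car (Cs inv act k) :=
  match k as k0 return X -> car (Cs inv act k0) with
  | 0 => fun w => (w, GRing.one rat)
  | k'.+1 => fun w => qmap act (germ act (@eqI G X act (Cs inv act k')) w
               ([set: X], fun _ => phif_of (cc k')))
  end.

Definition phif k := phif_of (cc k).
Definition Rk k : set X * S (Cs inv act k) := ([set: X], fun _ => phif k).

Definition ccP k := (forall w, fib (cc k w) w) /\
  (forall g z, sact (Cs inv act k) g (cc k (act (inv g) z)) = cc k z).

Lemma phif_inv k g z : ccP k ->
  sact (Cs inv act k) g (phif k (act (inv g) z)) = phif k z.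
Proof.
move=> [_ H]; rewrite /phif /phif_of.
case: pselect => h1; case: pselect => h2.
- exact: H.
- by exfalso; apply: h2; move: h1; rewrite height_actE.
- by exfalso; apply: h1; rewrite height_actE.
- by rewrite (g_actzero (Good_Cs k)) actKV.
Qed.

Lemma phif_fib k z : ccP k -> fib (phif k z) z.
Proof.
move=> [H _]; rewrite /phif /phif_of; case: pselect => hh; first exact: H.
exact: (g_zero (Good_Cs k)).
Qed.

Lemma Rk_sec k : ccP k -> sec (Rk k).
Proof.
by move=> P; apply/secP; split=> [|A oA z _ _]; [exact: openT | exact: phif_fib].
Qed.

Lemma Rk_EP k : ccP k -> EP (Rk k).
Proof.
move=> P; apply: (EP_inv (Good_Cs k)); first exact: Rk_sec.
by move=> g A z _ _; apply: phif_inv.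
Qed.

Lemma Rk_gR k g y : ccP k -> eqI act y (gR g (Rk k)) (Rk k).
Proof.
move=> P; apply: (@eqI_ptw _ _ _ _ setT) => //; first exact: openT.
  by move=> u _; split=> //; exists (act (inv g) u) => //; rewrite actKV.
by move=> A u oA _ Au /=; apply: phif_inv.
Qed.

Lemma cc_props k : ccP k.
Proof.
elim: k => [|k IH].
  split=> [w|g z]; first by [].
  by rewrite /= actKV.
have gF := Good_Cs k.
have sR := Rk_sec IH.
split=> [w|g z].
  rewrite /= (qmap_germ gF sR) //.
  by apply/(fibC gF); exists (Rk k); split=> //; apply: Rk_EP.
rewrite /= !(qmap_germ gF sR) //.
rewrite (germC_act gF) // actKV.
apply: (gC_of_eqI gF) => //; first exact: (sec_gR gF).
exact: Rk_gR.
Qed.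

Lemma N_Core k : (forall v, @cbX X k v -> cc k v <> szero (Cs inv act k) v) ->
  forall u, @cbX X k.+1 u -> forall (W : set X) (sg : X -> car (Cs inv act k)),
  open W -> W u -> Gamma (Cs inv act k) W sg -> ~ (forall z, W z -> phif k z = sg z).
Proof.
move=> N u cu W sg oW Wu gs H.
have gF := Good_Cs k.
have su : sg u = szero _ u.
  rewrite -H // /phif /phif_of; case: pselect => // h.
  by exfalso; exact: not_height_S cu h.
have [V [oV Vu HV]] := g_seczero gF gs Wu su.
have [v [[Wv Vv] hv]] := dense_height cu (openI oW oV) (conj Wu Vu).
apply: (N v hv.1).
have <- : phif k v = cc k v by rewrite /phif /phif_of; case: pselect.
by rewrite H // HV.
Qed.

Lemma orbit_of z : Defs.orbit act (range (fun g => act g z)) /\ range (fun g => act g z) z.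
Proof. exact: orbit_self. Qed.

Lemma N_all k : forall v, @cbX X k v -> cc k v <> szero (Cs inv act k) v.
Proof.
elim: k => [|k IH].
  move=> v _ /= [] /eqP.
  by rewrite GRing.oner_eq0.
move=> v cv e.
have gF := Good_Cs k.
have sR := Rk_sec (cc_props k).
rewrite /= (qmap_germ gF sR) // in e.
have E := gC_rel gF sR I e.
case: E => W [t [oW Wv sub gt Ht]].
apply: (N_Core IH cv oW Wv gt) => z Wz.
have [oz zz] := orbit_of z.
have := Ht _ oz z Wz zz; rewrite /= => ->.
exact: (g_zl gF (Gamma_pt gt Wz)).
Qed.

Lemma nonimage0 x (U : set X) : @cbX X 1 x -> open U -> U x ->
  ~ (exists t : X -> car (Iprev inv act 0), Gamma (Iprev inv act 0) U t /\
      forall y, U y -> delta inv act 0 U t y = germ act (@eqI G X act (Cs inv act 0)) y (Rk 0)).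
Proof.
move=> cx oU Ux [t [gt ht]].
have st : sec (U, fun _ => t) by apply/secP; split=> // A oA z Uz Az; exact: Gamma_pt gt Uz.
have E := gI_rel st Ux (ht x Ux).
case: E => W [oW Wx sub HW].
have gW : Gamma (Cs inv act 0) W t by apply: (Gamma_sub _ gt) => z /sub [].
apply: (N_Core (@N_all 0) cx oW Wx gW) => z Wz.
have [oz zz] := orbit_of z.
by symmetry; exact: (HW _ oz z Wz zz).
Qed.

Lemma nonimageS k x (U : set X) : @cbX X k.+2 x -> open U -> U x ->
  ~ (exists t : X -> car (Iprev inv act k.+1), Gamma (Iprev inv act k.+1) U t /\
      forall y, U y -> delta inv act k.+1 U t y =
        germ act (@eqI G X act (Cs inv act k.+1)) y (Rk k.+1)).
Proof.
move=> cx oU Ux [t [gt ht]].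
have gFk := Good_Cs k.
have Pk := cc_props k.
have [r [V [EPr oV Vx Hr]]] := liftI gt Ux.
have sr := EPr.1.
have sq : @sec (Cs inv act k.+1) (U, fun _ z => qmap act (t z)).
  apply/secP; split=> // A oA z Uz Az; have [pz fz] := Gamma_pt gt Uz.
  by split; [exists (t z) | ].
have E := gI_rel sq Ux (ht x Ux).
case: E => W0 [oW0 W0x sub0 H0].
have H0' : forall z, W0 z -> qmap act (t z) = phif k.+1 z.
  by move=> z Wz; have [oz zz] := orbit_of z; exact: (H0 _ oz z Wz zz).
have ex : qmap act (t x) = germ act (@eqC G X act (Cs inv act k)) x (zR _).
  rewrite H0' // /phif /phif_of; case: pselect => // h.
  by exfalso; exact: not_height_S cx h.
have [rx tx] := Hr x Ux Vx.
rewrite tx (qmap_germ gFk sr rx) in ex.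
have E1 := gC_rel gFk sr rx ex.
case: E1 => W1 [t1 [oW1 W1x sub1 gt1 H1]].
have oW : open (U `&` V `&` W0 `&` W1) by do !apply: openI.
have [u [[[[Uu Vu] W0u] W1u] hu]] := dense_height cx oW (conj (conj (conj Ux Vx) W0x) W1x).
have [ru tu] := Hr u Uu Vu.
have eu : germ act (@eqC G X act (Cs inv act k)) u (Rk k) =
          germ act (@eqC G X act (Cs inv act k)) u r.
  rewrite -(qmap_germ gFk sr ru) -tu H0' // /phif /phif_of.
  case: pselect => hh; last by exfalso; apply: hh.
  by rewrite /= (qmap_germ gFk (Rk_sec Pk)).
have E2 := gC_rel gFk (Rk_sec Pk) I eu.
case: E2 => W2 [t2 [oW2 W2u sub2 gt2 H2]].
have gs : Gamma (Cs inv act k) (W1 `&` W2) (fun z => sadd _ (t1 z) (t2 z)).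
  by apply: (g_secadd gFk); [apply: (Gamma_sub _ gt1) | apply: (Gamma_sub _ gt2)]; move=> ? [].
apply: (N_Core (@N_all k) hu.1 (openI oW1 oW2) (conj W1u W2u) gs) => z [W1z W2z].
have [oz zz] := orbit_of z.
have := H2 _ oz z W2z zz; rewrite /= => ->.
rewrite (H1 _ oz z W1z zz).
by rewrite (g_zl gFk (Gamma_pt gt1 W1z)).
Qed.

Lemma main_lemma i x (U : set X) : @cbX X i.+1 x -> open U -> U x ->
  exists s : X -> car (Is inv act i),
    [/\ Gamma (Is inv act i) U s,
        (forall g, act g x = x -> forall y, U y ->
           sact (Is inv act i) g (s y) = s (act g y)) &
        ~ (exists t : X -> car (Iprev inv act i),
             Gamma (Iprev inv act i) U t /\
             forall y, U y -> delta inv act i U t y = s y)].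
Proof.
move=> cx oU Ux.
have gF := Good_Cs i.
have P := cc_props i.
have sR := Rk_sec P.
have EPR := Rk_EP P.
exists (fun y => germ act (@eqI G X act (Cs inv act i)) y (Rk i)); split.
- by apply: (SecRepI EPR).
- move=> g _ y _ /=.
  rewrite (germI_act gF) //.
  apply: gI_eq; [exact: (sec_gR gF) | exact: sR | exact: Rk_gR].
- clear gF P sR EPR; case: i cx => [|k] cx.
    exact: (nonimage0 cx oU Ux).
  exact: (nonimageS cx oU Ux).
Qed.

End Main.

Theorem proposition5p13 (G X : topologicalType)
  (mul : G -> G -> G) (inv : G -> G) (one : G) (act : G -> X -> X) (n : nat)
  (B : X -> set (set X)) :
  is_profinite_group mul inv one ->
  is_profinite_Gspace mul one act ->
  scattered X -> cb_rank X n ->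
  (forall x U, B x U -> [/\ open U, U x &
      forall g, act g x = x -> forall y, U y -> U (act g y)]) ->
  (forall x N, nbhs x N -> exists2 U, B x U & U `<=` N) ->
  forall x U, B x U -> forall i : nat, (exists k, height x k /\ (i < k)%N) ->
  exists s : X -> car (Is inv act i),
    [/\ Gamma (Is inv act i) U s,
        (forall g, act g x = x -> forall y, U y ->
           sact (Is inv act i) g (s y) = s (act g y)) &
        ~ (exists t : X -> car (Iprev inv act i),
             Gamma (Iprev inv act i) U t /\
             forall y, U y -> delta inv act i U t y = s y)].
Proof.
move=> [[_ _ Hinv] _ _ _] [act1 actM act_cont _] scat _ HB _ x U BxU i [k [[ck _] ik]].
have [oU Ux _] := HB x U BxU.
apply: (main_lemma act1 actM (fun g => (Hinv g).1) (fun g => (Hinv g).2) act_cont scat) => //.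
exact: (cbX_mono ik).
Qed.
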